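(* Let $p$ be an SCF that is rationalizable within the class of symmetric RUMs, and let $x,y\in X$. If $(x,y)\in T(R^s)$, then every symmetric RUM $(u,g)$ rationalizing $p$ satisfies $u(x)\geq u(y)$. If $(x,y)\in T_P(R^s)$, then every such model satisfies $u(x)>u(y)$.
   Context: $X$ is a finite set of options; $C=\{(x,y): x,y\in X,\ x\neq y\}$; $D\subseteq C$ is a fixed non-empty set with $(x,y)\in D\Rightarrow (y,x)\in D$. An SCF $p$ assigns to each $(x,y)\in D$ a number $p(x,y)>0$ with $p(x,y)+p(y,x)=1$. A RUM is a pair $(u,g)$ with $u:X\to\mathbb{R}$ and $g$ assigning to each $(x,y)\in C$ a density $g(x,y)$ on $\mathbb{R}$ (cdf $G(x,y)$) with $\int v\,g(x,y)(v)\,dv=u(x)-u(y)=:v(x,y)$, $g(x,y)(v)=g(y,x)(-v)$ for all $v$, and connected support. A RUM rationalizes $p$ if $G(x,y)(0)=p(y,x)$ for all $(x,y)\in D$. A RUM is symmetric if $g(x,y)(v(x,y)+\delta)=g(x,y)(v(x,y)-\delta)$ for all $(x,y)\in C$, $\delta\geq0$. The relation $R^s$ on $X$: $(x,y)\in R^s$ iff $x=y$, or $(x,y)\in D$ and $p(x,y)\geq p(y,x)$. For a binary relation $R$ on $X$, $T(R)$ is its transitive closure ($(x,y)\in T(R)$ iff there is a sequence $x_1=x,\dots,x_n=y$, $n\geq2$, with $(x_k,x_{k+1})\in R$ for all $k$), and $T_P(R)$ is the asymmetric part of $T(R)$: $(x,y)\in T(R)$ and $(y,x)\notin T(R)$.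 *)

(* Defs.v *)
From HB Require Import structures.
From mathcomp Require Import all_boot all_order all_algebra.
From mathcomp Require Import all_classical all_reals all_analysis.
Set Implicit Arguments. Unset Strict Implicit. Unset Printing Implicit Defensive.
Import Order.TTheory GRing.Theory Num.Theory.
Import numFieldNormedType.Exports.
Local Open Scope classical_set_scope.
Local Open Scope ring_scope.

Section Defs.
Variables (R : realType) (X : finType).

Definition valid_domain (D : X -> X -> Prop) : Prop :=
  (exists x y, D x y) /\ (forall x y, D x y -> x <> y) /\ (forall x y, D x y -> D y x).

Definition is_SCF (D : X -> X -> Prop) (p : X -> X -> R) : Prop :=
  forall x y, D x y -> 0 < p x y /\ p x y + p y x = 1.

Definition is_density (f : R -> R) : Prop :=
  measurable_fun setT f /\ (forall v, 0 <= f v) /\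
  (\int[lebesgue_measure]_v (f v)%:E = 1%:E)%E.

Definition has_mean (f : R -> R) (m : R) : Prop :=
  lebesgue_measure.-integrable setT (fun v => (v * f v)%:E) /\
  (\int[lebesgue_measure]_v (v * f v)%:E = m%:E)%E.

Definition connected_support (f : R -> R) : Prop :=
  connected [set v | 0 < f v].

Definition cdf (f : R -> R) (t : R) : \bar R :=
  (\int[lebesgue_measure]_(v in `]-oo, t]) (f v)%:E)%E.

Definition is_RUM (u : X -> R) (g : X -> X -> R -> R) : Prop :=
  forall x y, x <> y ->
    is_density (g x y) /\ has_mean (g x y) (u x - u y) /\
    (forall v, g x y v = g y x (- v)) /\ connected_support (g x y).

Definition rationalizes (u : X -> R) (g : X -> X -> R -> R)
    (D : X -> X -> Prop) (p : X -> X -> R) : Prop :=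
  forall x y, D x y -> cdf (g x y) 0 = (p y x)%:E.

Definition symmetric_RUM (u : X -> R) (g : X -> X -> R -> R) : Prop :=
  forall x y, x <> y -> forall delta, 0 <= delta ->
    g x y (u x - u y + delta) = g x y (u x - u y - delta).

Definition sym_rationalizable (D : X -> X -> Prop) (p : X -> X -> R) : Prop :=
  exists u g, is_RUM u g /\ symmetric_RUM u g /\ rationalizes u g D p.

Definition Rs (D : X -> X -> Prop) (p : X -> X -> R) (x y : X) : Prop :=
  x = y \/ (D x y /\ p y x <= p x y).

End Defs.

Inductive tclos (T : Type) (Rel : T -> T -> Prop) : T -> T -> Prop :=
  | tclos_step x y : Rel x y -> tclos Rel x y
  | tclos_cons x y z : Rel x y -> tclos Rel y z -> tclos Rel x z.

Definition tclosP (T : Type) (Rel : T -> T -> Prop) (x y : T) : Prop :=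
  tclos Rel x y /\ ~ tclos Rel y x.

(* Main.v *)
Require Import Defs.
From HB Require Import structures.
From mathcomp Require Import all_boot all_order all_algebra.
From mathcomp Require Import all_classical all_reals all_analysis.
From mathcomp Require Import measurable_realfun lra.
Set Implicit Arguments. Unset Strict Implicit. Unset Printing Implicit Defensive.
Import Order.TTheory GRing.Theory Num.Theory.
Import numFieldNormedType.Exports.
Local Open Scope classical_set_scope.
Local Open Scope ring_scope.

Section Aux.
Variable R : realType.
Local Notation mu := (@lebesgue_measure R).

Definition rfl (c : R) : measurableTypeR R -> measurableTypeR R := fun v => c - v.

Lemma mrefl (c : R) : measurable_fun setT (rfl c).
Proof. by apply: measurable_funB. Qed.

Definition pf (c : R) := pushforward mu (rfl c).

Section pfm.
Variable c : R.
Let pf0 : pf c set0 = 0%E.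
Proof. by rewrite /pf /pushforward preimage_set0 measure0. Qed.
Let pf_ge0 A : (0 <= pf c A)%E.
Proof. by rewrite /pf /pushforward; apply: measure_ge0. Qed.
Let pf_sa : semi_sigma_additive (pf c).
Proof.
move=> F mF tF mUF; rewrite /pf /pushforward preimage_bigcup.
apply: measure_semi_sigma_additive.
- by move=> n; rewrite -[X in measurable X]setTI; exact: mrefl.
- apply/trivIsetP => /= i j _ _ ij; rewrite -preimage_setI.
  by move/trivIsetP : tF => /(_ _ _ _ _ ij) ->//; rewrite preimage_set0.
- by rewrite -preimage_bigcup -[X in measurable X]setTI; exact: mrefl.
Qed.
HB.instance Definition _ := isMeasure.Build _ _ _ (pf c) pf0 pf_ge0 pf_sa.
End pfm.

Lemma reflect_leb (c : R) (A : set R) : measurable A ->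
  mu A = pf c A.
Proof.
move=> mA.
have := @lebesgue_measure_unique R (pf c).
apply => // X /ocitvP [->|[[a b]/= ab ->]].
  by rewrite !measure0.
rewrite /pf /pushforward /rfl.
have -> : (fun v => c - v) @^-1` `]a, b]%classic = `[c - b, c - a[%classic.
  apply/seteqP; split => v; rewrite /= !in_itv /= => /andP[h1 h2];
  apply/andP; split; lra.
rewrite !lebesgue_measure_itv /= !lte_fin ab ltrD2l ltrN2 ab.
by rewrite -!EFinD; congr EFin; lra.
Qed.

Lemma integral_rfl (c : R) (D : set R) (h : R -> \bar R) : measurable D ->
  measurable_fun D h -> (forall x, D x -> (0 <= h x)%E) ->
  (\int[mu]_(x in D) h x = \int[mu]_(x in rfl c @^-1` D) h (c - x)%R)%E.
Proof.
move=> mD mh h0.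
rewrite (@eq_measure_integral _ _ _ _ (pf c)); last first.
  by move=> A mA _; exact: reflect_leb.
rewrite /pf (ge0_integral_pushforward (mrefl c)) //.
by move=> y; rewrite inE => /h0.
Qed.

Lemma half (f : R -> R) (m : R) : measurable_fun setT f -> (forall v, 0 <= f v) ->
  (\int[mu]_v (f v)%:E = 1%:E)%E -> (forall v, f (2 * m - v) = f v) ->
  Defs.cdf f m = (2^-1)%:E.
Proof.
move=> mf f0 f1 fs.
have mfE : forall D, measurable_fun D (fun v => (f v)%:E).
  by move=> D; apply/measurable_EFinP; apply: measurable_funS mf.
have f0E : forall (D : set R) x, D x -> (0 <= (f x)%:E)%E by move=> D x _; rewrite lee_fin.
have e1 : (\int[mu]_(v in `[m, +oo[%classic) (f v)%:E = Defs.cdf f m)%E.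
  rewrite (integral_rfl (2 * m)) //; last by move=> x _; rewrite lee_fin.
  rewrite /Defs.cdf.
  have -> : rfl (2 * m) @^-1` `[m, +oo[%classic = `]-oo, m]%classic.
    by apply/seteqP; split => v; rewrite /rfl /= !in_itv /= ?andbT => h; lra.
  by apply: eq_integral => x _; rewrite fs.
have e2 : (\int[mu]_(v in `]m, +oo[%classic) (f v)%:E = \int[mu]_(v in `[m, +oo[%classic) (f v)%:E)%E.
  by apply: integral_itv_obnd_cbnd.
have e3 : (Defs.cdf f m + \int[mu]_(v in `]m, +oo[%classic) (f v)%:E = 1%:E)%E.
  have U : [set: R] = `]-oo, m]%classic `|` `]m, +oo[%classic.
    apply/seteqP; split => v //= _; rewrite !in_itv /= ?andbT.
    by case: (leP v m) => h; [left|right].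
  rewrite -f1 U ge0_integral_setU //.
  - exact: mfE.
  - by move=> x _; rewrite lee_fin.
  - apply/disj_setPS => v [] /=; rewrite !in_itv /= ?andbT => h1 h2.
    by move: (le_lt_trans h1 h2); rewrite ltxx.
rewrite e2 e1 in e3.
have c0 : (0 <= Defs.cdf f m)%E by apply: integral_ge0 => x _; rewrite lee_fin.
move: c0 e3; case: (Defs.cdf f m) => [r| |] //= r0.
by rewrite -EFinD => -[h]; congr EFin; lra.
Qed.

Lemma pos_int (f : R -> R) (a b : R) : a < b -> measurable_fun setT f ->
  (forall v, 0 <= f v) -> (forall v, a < v -> v <= b -> 0 < f v) ->
  (0 < \int[mu]_(v in `]a, b]%classic) (f v)%:E)%E.
Proof.
move=> ab mf f0 fp.
rewrite lt0e integral_ge0 ?andbT; last by move=> x _; rewrite lee_fin.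
apply/negP => /eqP h0.
have : ae_eq mu `]a, b]%classic (fun v => (f v)%:E) (cst 0%E).
  apply/ae_eq_integral_abs => //.
    by apply/measurable_EFinP; apply: measurable_funS mf.
  rewrite -h0; apply: eq_integral => x _; rewrite gee0_abs //; rewrite lee_fin; exact: f0.
case=> A [mA A0 sub].
have sA : `]a, b]%classic `<=` A.
  move=> v hv; apply: sub => /= /(_ hv) [] /eqP.
  move: hv; rewrite /= in_itv /= => /andP[h1 h2].
  by rewrite (gt_eqF (fp _ h1 h2)).
have : (mu `]a, b]%classic <= mu A)%E.
  by apply: le_measure => //; rewrite inE //; exact: measurable_itv.
rewrite A0 lebesgue_measure_itv /= lte_fin ab -EFinD lee_fin.
by rewrite subr_le0 leNgt ab.
Qed.

Lemma gt_half (f : R -> R) (m : R) : m < 0 -> measurable_fun setT f ->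
  (forall v, 0 <= f v) -> (\int[mu]_v (f v)%:E = 1%:E)%E ->
  (forall v, f (2 * m - v) = f v) -> is_interval [set v | 0 < f v] ->
  ((2^-1)%:E < Defs.cdf f 0)%E.
Proof.
move=> m0 mf f0 f1 fs iS.
have mfE : forall D, measurable_fun D (fun v => (f v)%:E).
  by move=> D; apply/measurable_EFinP; apply: measurable_funS mf.
have hh := half mf f0 f1 fs.
have [s [sm fs0]] : exists s, s != m /\ 0 < f s.
  case: (pselect (exists s, s != m /\ 0 < f s)) => // hn; exfalso.
  have z : forall v, v != m -> f v = 0.
    move=> v vm; apply/eqP; rewrite eq_le f0 andbT leNgt; apply/negP => h.
    by apply: hn; exists v.
  move: hh; rewrite /Defs.cdf -integral_itv_bndo_bndc; last exact: mfE.
  rewrite integral0_eq.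
    by move/eqP; rewrite eq_sym eqe invr_eq0 pnatr_eq0.
  move=> x; rewrite /= in_itv /= => xm.
  by rewrite z // lt_eqF.
have [lo [hi [lom [mhi [flo fhi]]]]] :
    exists lo hi, lo < m /\ m < hi /\ 0 < f lo /\ 0 < f hi.
  case: (ltgtP s m) sm => // h _.
  - by exists s, (2 * m - s); rewrite fs; repeat split => //; lra.
  - by exists (2 * m - s), s; rewrite fs; repeat split => //; lra.
pose b := Num.min hi 0.
have mb : m < b by rewrite lt_min mhi m0.
have pos : (0 < \int[mu]_(v in `]m, b]%classic) (f v)%:E)%E.
  apply: pos_int => // v h1 h2.
  apply: (iS lo hi) => //; rewrite (ltW (lt_trans lom h1)) /=.
  by move: h2; rewrite /b le_min => /andP[].
have J : (\int[mu]_(v in `]m, b]%classic) (f v)%:E <=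
          \int[mu]_(v in `]m, 0%R]%classic) (f v)%:E)%E.
  apply: ge0_subset_integral => //; first exact: mfE.
    by move=> x _; rewrite lee_fin.
  move=> v; rewrite /= !in_itv /= => /andP[-> h] /=.
  by move: h; rewrite /b le_min => /andP[].
have U : `]-oo, 0]%classic = `]-oo, m]%classic `|` `]m, 0]%classic.
  apply/seteqP; split => v /=; rewrite !in_itv /= ?andbT.
    by move=> v0; case: (leP v m) => h; [left|right; apply/andP].
  by case => [h|/andP[_ h]] //; apply: (le_trans h); exact: ltW.
rewrite /Defs.cdf U ge0_integral_setU //.
- rewrite -/(Defs.cdf f m) hh lteDl //.
  exact: (lt_le_trans pos J).
- rewrite -U; exact: mfE.
- by move=> x _; rewrite lee_fin.
- apply/disj_setPS => v [] /=; rewrite !in_itv /= ?andbT => h1 /andP[h2 _].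
  by move: (le_lt_trans h1 h2); rewrite ltxx.
Qed.
End Aux.

Section Main.
Variables (R : realType) (X : finType) (D : X -> X -> Prop) (p : X -> X -> R).
Variables (u : X -> R) (g : X -> X -> R -> R).
Hypotheses (vD : valid_domain D) (scf : is_SCF D p) (rum : is_RUM u g)
  (sym : symmetric_RUM u g) (rat : rationalizes u g D p).

Lemma step a b : Rs D p a b -> u b <= u a /\ (u a = u b -> Rs D p b a).
Proof.
case: vD => [_ [Dneq Dsym]].
case=> [<-|[Dab pba]]; first by split => // _; left.
have ab := Dneq a b Dab.
have [[mg [g0 g1]] [_ [_ conn]]] := rum ab.
pose m := u a - u b.
have fs : forall v, g a b (2 * m - v) = g a b v.
  move=> v; case: (leP m v) => h.
  - have hd : 0 <= v - m by rewrite subr_ge0.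
    have := sym ab hd.
    rewrite -/m (_ : m + (v - m) = v); last by lra.
    by rewrite (_ : m - (v - m) = 2 * m - v) //; lra.
  - have hd : 0 <= m - v by rewrite subr_ge0 ltW.
    have := sym ab hd.
    rewrite -/m (_ : m + (m - v) = 2 * m - v); last by lra.
    by rewrite (_ : m - (m - v) = v) //; lra.
have rab := rat Dab.
have [p0 psum] := scf Dab.
have iS := (connected_intervalP _).1 conn.
split.
- rewrite leNgt; apply/negP => h.
  have m0 : m < 0 by rewrite /m; lra.
  have := gt_half m0 mg g0 g1 fs iS.
  rewrite rab lte_fin; lra.
- move=> e.
  have m0 : m = 0 by rewrite /m e subrr.
  have := half mg g0 g1 fs; rewrite m0 rab => -[h].
  right; split; [exact: Dsym | lra].
Qed.

Lemma tclos_le x y : tclos (Rs D p) x y -> u y <= u x.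
Proof.
elim=> [a b /step [] //|a b c /step [h _] _ ih].
exact: le_trans ih h.
Qed.

Lemma tclos_snoc (T : Type) (Rel : T -> T -> Prop) x y z :
  tclos Rel x y -> Rel y z -> tclos Rel x z.
Proof.
elim=> [a b h1 h2|a b c h1 _ ih h2].
- exact: tclos_cons h1 (tclos_step h2).
- exact: tclos_cons h1 (ih h2).
Qed.

Lemma tclos_rev x y : tclos (Rs D p) x y -> u x <= u y -> tclos (Rs D p) y x.
Proof.
elim=> [a b /step [h1 h2] h|a c b hac hcb ih h].
- by apply: tclos_step; apply: h2; apply/eqP; rewrite eq_le h h1.
- have [h1 h2] := step hac.
  have h3 := tclos_le hcb.
  have eab : u a = u c by apply/eqP; rewrite eq_le h1 (le_trans h h3).
  have ecb : u c <= u b by rewrite -eab.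
  exact: tclos_snoc (ih ecb) (h2 eab).
Qed.
End Main.

Theorem corollary3 (R : realType) (X : finType) (D : X -> X -> Prop)
    (p : X -> X -> R) :
  valid_domain D -> is_SCF D p -> sym_rationalizable D p ->
  forall x y : X,
    (tclos (Rs D p) x y ->
       forall (u : X -> R) (g : X -> X -> R -> R),
         is_RUM u g -> symmetric_RUM u g -> rationalizes u g D p ->
         u y <= u x) /\
    (tclosP (Rs D p) x y ->
       forall (u : X -> R) (g : X -> X -> R -> R),
         is_RUM u g -> symmetric_RUM u g -> rationalizes u g D p ->
         u y < u x).
Proof.
move=> vD scf _ x y; split.
- by move=> H u g rum sym rat; exact: (tclos_le vD scf rum sym rat H).
- move=> [H nH] u g rum sym rat; rewrite ltNge; apply/negP => h.
  by apply: nH; exact: (tclos_rev vD scf rum sym rat H h).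
Qed.
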